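(* Let $M\ge 2$ be an integer. Take all $M-1$ identifiers of one group (anchor position $g$) and one identifier from a different group (anchor position $g'\neq g$). Then the $M\times M$ integer matrix whose rows are the corresponding coefficient vectors $\big(2^{\,M-1-r_1},\dots,2^{\,M-1-r_M}\big)$ has rank $M$ (over $\mathbb{Q}$), i.e. the encoded packet from the different group is linearly independent of the encoded packets of the group.
   Context: A batch of $M$ data packets $c_1,\dots,c_M$ is encoded as follows: an encoded packet is specified by an identifier $(r_1,\dots,r_M)$ of nonnegative integers; each packet $c_m$ is padded with $r_m$ zero bits at its head (and zeros at its tail so all have equal length), which in ordinary integer arithmetic amounts to forming $2^{r_{\max}-r_m}c_m$ with $r_{\max}=\max_m r_m$, and the padded packets are XORed. The coefficient vector of the encoded packet is $(2^{r_{\max}-r_1},\dots,2^{r_{\max}-r_M})$, and ranks are computed in ordinary (rational) arithmetic. In the (first-round) construction, every identifier is a bijection $\{1,\dots,M\}\to\{0,1,\dots,M-1\}$ (so $r_{\max}=M-1$), and the identifiers are arranged into $M$ groups indexed by an anchor position $g\in\{1,\dots,M\}$: the group with anchor position $g$ consists of the $M-1$ identifiers with $r_g=0$ whose entries at the positions other than $g$, read in increasing order of position, form the cyclic right shifts by $k=0,1,\dots,M-2$ of $(1,2,\dots,M-1)$. For example, the group with anchor $1$ is $(0,1,2,\dots,M-1),(0,M-1,1,\dots,M-2),\dots,(0,2,3,\dots,M-1,1)$, and the group with anchor $2$ starts with $(1,0,2,3,\dots,M-1)$. *)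

(* Defs.v *)
(* Positions 1..M of the paper are 'I_M (0-indexed). *)
From mathcomp Require Import all_boot all_order all_algebra.
Set Implicit Arguments. Unset Strict Implicit. Unset Printing Implicit Defensive.
Import GRing.Theory Num.Theory.

Definition identifier (M : nat) := 'I_M -> nat.

(* The k-th identifier (k = 0..M-2) of the group with anchor position g:
   r_g = 0, and the entries at positions other than g, read in increasing
   order of position, form the cyclic right shift by k of (1,2,...,M-1). *)
Definition group_ident (M : nat) (g : 'I_M) (k : nat) : identifier M :=
  fun i => if i == g then 0%N
           else nth 0%N (rotr k (iota 1 M.-1)) (if (i < g)%N then val i else (val i).-1).

Definition rmax (M : nat) (r : identifier M) : nat := \max_(i < M) r i.

Definition coef_vec (M : nat) (r : identifier M) : 'rV[rat]_M :=
  \row_(i < M) (2%:R ^+ (rmax r - r i))%R.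

Definition test_matrix (M : nat) (g g' : 'I_M) (k' : nat) : 'M[rat]_M :=
  \matrix_(j < M) coef_vec (if (j < M.-1)%N then group_ident g j
                            else group_ident g' k').

(* Main.v *)
Require Import Defs.
From mathcomp Require Import all_boot all_order all_algebra.
From mathcomp Require Import zify ring lra.
Import GRing.Theory Num.Theory.

Definition Dd (n j k : nat) : nat := if (k <= j)%N then (j - k)%N else (j + n - k)%N.

Lemma nth_rotr_iota n k j : (k < n)%N -> (j < n)%N ->
  nth 0%N (rotr k (iota 1 n)) j = (Dd n j k).+1.
Proof.
move=> kn jn; rewrite /rotr size_iota /rot nth_cat size_drop size_iota.
have -> : (n - (n - k) = k)%N by lia.
rewrite /Dd; case: (leqP k j) => kj.
- rewrite nth_take; last by lia.
  rewrite nth_iota; lia.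
- rewrite nth_drop nth_iota; lia.
Qed.

Lemma gi_lift n (g : 'I_n.+1) (j : 'I_n) k :
  group_ident g k (lift g j) = nth 0%N (rotr k (iota 1 n)) j.
Proof.
rewrite /group_ident eq_sym (negbTE (neq_lift g j)) /=.
congr nth; rewrite /bump; case: (leqP g j) => H /=; case: ifP => *; lia.
Qed.

Lemma gi_g n (g : 'I_n) k : group_ident g k g = 0%N.
Proof. by rewrite /group_ident eqxx. Qed.

Local Open Scope ring_scope.

Definition y : rat := 2^-1.

Lemma sum_coef M (r : identifier M) (u : 'rV[rat]_M) :
  \sum_j u 0 j * coef_vec r 0 j = 2 ^+ rmax r * \sum_j y ^+ r j * u 0 j.
Proof.
rewrite mulr_sumr; apply: eq_bigr => j _; rewrite mxE.
have le : (r j <= rmax r)%N by apply: (leq_bigmax (F := r)).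
rewrite /y exprVn mulrA mulrC; congr (_ * _).
have -> : (rmax r = (rmax r - r j) + r j)%N by lia.
rewrite exprD addnK -mulrA divff ?mulr1 //.
by rewrite expf_neq0.
Qed.

Lemma D_diff n j k : (j < n)%N -> (k < n)%N -> j <> k -> (Dd n j k.+1).+1 = Dd n j k.
Proof. rewrite /Dd => *; case: ifP; case: ifP => *; lia. Qed.
Lemma D_k1 n k : (k < n)%N -> Dd n k k.+1 = n.-1.
Proof. rewrite /Dd => *; case: ifP => *; lia. Qed.
Lemma D_kk n k : Dd n k k = 0%N.
Proof. by rewrite /Dd leqnn subnn. Qed.
Lemma D_n n j : (j < n)%N -> Dd n j n = Dd n j 0.
Proof. rewrite /Dd leq0n subn0 => *; case: ifP => *; lia. Qed.

Lemma y2 : 2 * y = 1.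
Proof. by rewrite /y divff. Qed.

Lemma y_ge0 : 0 <= y. Proof. by rewrite /y invr_ge0. Qed.
Lemma y_lt1 : y < 1. Proof. by rewrite /y invf_lt1. Qed.

Theorem lemma2 (M : nat) (g g' : 'I_M) (k' : nat) :
  (2 <= M)%N -> g != g' -> (k' < M.-1)%N ->
  \rank (test_matrix g g' k') = M.
Proof.
case: M g g' => [|n] g g'; first by case: g.
move=> M2 gg' kn /=.
rewrite -mxrank_tr.
set A := test_matrix g g' k'.
suff Hker: forall u : 'rV[rat]_n.+1, u *m A^T = 0 -> u = 0.
  have K0 : kermx A^T = 0.
    apply/row_matrixP => i; rewrite row0; apply: Hker.
    by rewrite -row_mul mulmx_ker row0.
  have := mxrank_ker A^T; rewrite K0 mxrank0.
  have := rank_leq_row A^T; move: (\rank A^T) => r; lia.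
move=> u Hu.
have E : forall i : 'I_n.+1,
  \sum_j y ^+ ((if (i < n)%N then group_ident g i else group_ident g' k') j) * u 0 j = 0.
  move=> i; have H := congr1 (fun m : 'rV_n.+1 => m 0 i) Hu; rewrite !mxE in H.
  have : \sum_j u 0 j * coef_vec (if (i < n)%N then group_ident g i else group_ident g' k') 0 j = 0.
    by rewrite -[RHS]H; apply: eq_bigr => j _; rewrite mxE /A /test_matrix !mxE.
  rewrite (sum_coef _ (if (i < n)%N then group_ident g i else group_ident g' k') u) => /eqP; rewrite mulf_eq0 expf_eq0 => /orP[/andP[_ //]|/eqP //].
have kn' : (k' < n)%N by [].
have n1 : (0 < n)%N by lia.
pose x := fun j : 'I_n => (u 0 (lift g j) : rat).
pose c0 : rat := u 0 g.
pose F k := c0 + \sum_(j < n) y ^+ (Dd n j k).+1 * x j.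
have Hsplit : forall r : identifier n.+1,
    \sum_j y ^+ r j * u 0 j = y ^+ r g * c0 + \sum_(j < n) y ^+ r (lift g j) * x j.
  by move=> r; rewrite (bigD1_ord g) //=.
have Fk : forall k, (k < n)%N -> F k = 0.
  move=> k kn0; have := E (inord k); rewrite inordK; last lia.
  rewrite kn0 Hsplit gi_g expr0 mul1r => H; rewrite -[RHS]H /F; congr (_ + _).
  by apply: eq_bigr => j _; rewrite gi_lift nth_rotr_iota.
have aux : forall m (a : rat), y ^+ m.+1 * a - 2 * (y ^+ m.+2 * a) = 0.
  by move=> m a; rewrite (exprS y m.+1) !mulrA y2 mul1r subrr.
have Fdiff : forall k (kn0 : (k < n)%N),
    F k.+1 - 2 * F k = - c0 + (y ^+ n - 1) * x (Ordinal kn0).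
  move=> k kn0; rewrite /F mulrDr opprD addrACA.
  have -> : c0 - 2 * c0 = - c0 by ring.
  congr (_ + _).
  rewrite mulr_sumr -sumrB (bigD1 (Ordinal kn0)) //= big1.
    rewrite D_k1 // D_kk addr0 (prednK n1) expr1 !mulrA y2 mul1r.
    by rewrite mulrBl mul1r.
  move=> j jk.
  have ne : (j : nat) <> k by move=> e; move/eqP: jk; apply; apply: val_inj.
  by rewrite -(@D_diff n j k (ltn_ord j) kn0 ne : _ = Dd n j k) aux.
have plt : y ^+ n < 1 by rewrite exprn_ilt1 ?y_ge0 ?y_lt1 // -lt0n.
have pne : y ^+ n - 1 != 0 by rewrite subr_eq0 Order.POrderTheory.lt_eqF.
have Hx : forall k (kn0 : (k < n)%N), (y ^+ n - 1) * x (Ordinal kn0) = c0.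
  move=> k kn0; have h1 := Fk k kn0.
  have h2 : F k.+1 = 0.
    case: (ltnP k.+1 n) => h; first exact: Fk.
    have -> : k.+1 = n by lia.
    rewrite -(Fk 0%N n1) /F; congr (_ + _); apply: eq_bigr => j _.
    by rewrite D_n.
  move: (Fdiff k kn0); rewrite h1 h2; lra.
pose c := c0 / (y ^+ n - 1).
have xc : forall j, x j = c.
  move=> j; have -> : j = Ordinal (ltn_ord j) by apply: val_inj.
  apply: (mulfI pne); by rewrite Hx [RHS]mulrC divfK.
have c0c : c0 = (y ^+ n - 1) * c by rewrite /c mulrC divfK.
have [j0 Hj0] : exists j0, g' = lift g j0.
  by case: (unliftP g g') => [j ->|e]; [exists j | rewrite e eqxx in gg'].
have [j1 Hj1] : exists j1, g = lift g' j1.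
  by case: (unliftP g' g) => [j ->|e]; [exists j | rewrite e eqxx in gg'].
have := E ord_max; rewrite /= ltnn Hsplit.
under eq_bigr do rewrite xc.
rewrite -mulr_suml c0c.
set S := \sum_(j < n) _.
have S1 : 1 <= S.
  rewrite /S (bigD1 j0) //= -Hj0 gi_g expr0.
  have : 0 <= \sum_(i < n | i != j0) y ^+ group_ident g' k' (lift g i).
    by apply: sumr_ge0 => i _; apply: exprn_ge0; exact: y_ge0.
  lra.
rewrite Hj1 gi_lift nth_rotr_iota //.
set q := y ^+ _.
have q0 : 0 <= q by apply: exprn_ge0; exact: y_ge0.
have q1 : q < 1 by rewrite /q exprn_ilt1 ?y_ge0 ?y_lt1.
have p0 : 0 <= y ^+ n by apply: exprn_ge0; exact: y_ge0.
have qp : 0 <= q * y ^+ n by apply: mulr_ge0.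
move=> H.
have Hc : (q * y ^+ n - q + S) * c = 0.
  by rewrite -H; ring.
have cz : c = 0.
  move/eqP: Hc; rewrite mulf_eq0 => /orP[/eqP h|/eqP //].
  exfalso; move: h; lra.
apply/rowP => i; rewrite mxE.
case: (unliftP g i) => [j ->|->].
  by have := xc j; rewrite /x cz.
by have := c0c; rewrite /c0 cz mulr0.
Qed.
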